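(* Let $F$ be a finite field with $q=|F|$. Let $k,m,n\in\mathbb{N}$ with $k\le m$ and $k\le n+1$. Fix $a\in F^k$. Then $$\sum_{\substack{x\in F^{m+n+1}\\ x_{[0,k)}=a}}\ \sum_{\substack{v\in F^{1\times(m+1)}\\ v\ne 0}}[v\,H_{m,n}(x)=0] \;-\; q\sum_{\substack{x\in F^{m+n+1}\\ x_{[0,k)}=a}}\ \sum_{\substack{v\in F^{1\times m}\\ v\ne 0}}[v\,H_{m-1,n+1}(x)=0] = (q-1)q^{2m-k}.$$
   Context: $\mathbb{N}=\{0,1,2,\ldots\}$. $x_{[0,k)}$ denotes $(x_0,\ldots,x_{k-1})$. For a statement $\mathcal{A}$, $[\mathcal{A}]$ is $1$ if true, $0$ if false. For $x=(x_0,\ldots,x_N)\in F^{N+1}$ and integers $p,p'\ge -1$ with $p+p'\le N$, $H_{p,p'}(x)=(x_{i+j})_{0\le i\le p,\,0\le j\le p'}$. *)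

(* Defs.v *)
From HB Require Import structures.
From mathcomp Require Import all_boot all_order all_algebra.
Set Implicit Arguments. Unset Strict Implicit. Unset Printing Implicit Defensive.
Import GRing.Theory.
Local Open Scope ring_scope.

(* A vector x in F^N (indices 0..N-1) viewed as a function on nat
   (value 0 outside the range; never used out of range below). *)
Definition seqx (F : finFieldType) (N : nat) (x : {ffun 'I_N -> F}) (j : nat) : F :=
  if insub j is Some i then x i else 0.

(* The Hankel matrix with r rows and c columns, entries x_{i+j}:
   H_{p,p'}(x) = hankel (p+1) (p'+1) x. *)
Definition hankel (F : finFieldType) (r c : nat) (f : nat -> F) : 'M[F]_(r, c) :=
  \matrix_(i < r, j < c) f (i + j)%N.

Definition prefix_eq (F : finFieldType) (k N : nat) (a : 'rV[F]_k)
  (x : {ffun 'I_N -> F}) : bool :=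
  [forall i : 'I_k, seqx x i == a 0 i].

(* Main.v *)
Require Import Defs.
From mathcomp Require Import all_boot all_order all_algebra zify.
Set Implicit Arguments. Unset Strict Implicit. Unset Printing Implicit Defensive.
Import GRing.Theory.
Local Open Scope ring_scope.

Lemma card_inj_pre (T : finType) (h : T -> T) (P : pred T) :
  injective h -> #|[set x | P (h x)]| = #|[set x | P x]|.
Proof.
move=> hi; have -> : [set x | P (h x)] = h @^-1: [set x | P x].
  by apply/setP=> x; rewrite !inE.
exact: card_preimset.
Qed.

Lemma sum_bool_card (T : finType) (P Q : pred T) :
  (\sum_(x | P x) nat_of_bool (Q x))%N = #|[set x | P x && Q x]|.
Proof.
rewrite -sum1_card big_mkcond [RHS]big_mkcond /=; apply: eq_bigr => x _.
by rewrite inE; case: (P x); case: (Q x).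
Qed.

Lemma seqxE (F : finFieldType) N (x : {ffun 'I_N -> F}) (i : 'I_N) : seqx x i = x i.
Proof. by rewrite /seqx valK. Qed.

Lemma seqx_lt (F : finFieldType) N (x : {ffun 'I_N -> F}) j (h : (j < N)%N) :
  seqx x j = x (Ordinal h).
Proof. by rewrite -seqxE. Qed.

Lemma seqx_out (F : finFieldType) N (x : {ffun 'I_N -> F}) j :
  (N <= j)%N -> seqx x j = 0.
Proof. by move=> h; rewrite /seqx insubF // ltnNge h. Qed.

Lemma hankP (F : finFieldType) r c (v : 'rV[F]_r) f :
  (v *m hankel r c f == 0) = [forall j : 'I_c, \sum_(i < r) v 0 i * f (i + j)%N == 0].
Proof.
apply/eqP/forallP => [H j | H].
  apply/eqP; transitivity ((v *m hankel r c f) 0 j); last by rewrite H mxE.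
  by rewrite mxE; apply: eq_bigr => i _; rewrite mxE.
apply/rowP => j; rewrite [RHS]mxE -(eqP (H j)) mxE; apply: eq_bigr => i _; by rewrite mxE.
Qed.


Section B.
Variables (F : finFieldType) (k m n : nat) (a : 'rV[F]_k).
Hypotheses (hkm : (k <= m)%N) (hkn : (k <= n.+1)%N).
Local Notation N := (m + n + 1)%N.
Local Notation X := {ffun 'I_N -> F}.

Definition seqa (j : nat) : F := if insub j is Some i then a 0 i else 0.

Lemma seqaE j (h : (j < k)%N) : seqa j = a 0 (Ordinal h).
Proof. by rewrite /seqa insubT. Qed.

Definition gY (z : {ffun 'I_(m - k) -> F}) : X :=
  [ffun i : 'I_N => if (i < k)%N then seqa i else seqx z (i - k)].

Definition Yset := [set y : X | prefix_eq a y && [forall i : 'I_N, (m <= i)%N ==> (y i == 0)]].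

Lemma gY_inj : injective gY.
Proof.
move=> z z' H; apply/ffunP => j.
have hj : (j + k < N)%N by have := ltn_ord j; lia.
have := congr1 (fun f : X => f (Ordinal hj)) H; rewrite !ffunE /= ltnNge leq_addl /=.
by rewrite addnK !seqxE.
Qed.

Lemma Yset_im : Yset = gY @: setT.
Proof.
apply/setP => y; rewrite inE; apply/idP/imsetP.
  case/andP => hp hz; exists [ffun i : 'I_(m - k) => seqx y (i + k)]; first by [].
  apply/ffunP => i; rewrite !ffunE; case: ifP => hik.
    by rewrite (seqaE hik) -(eqP (forallP hp (Ordinal hik))) seqxE.
  rewrite /seqx; case: insubP => [j _ hj | hn].
    by rewrite ffunE hj subnK ?valK //; move: (negbT hik); rewrite -leqNgt.
  have hmi : (m <= i)%N by move: hn (negbT hik); rewrite -!leqNgt; lia.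
  by rewrite (eqP (implyP (forallP hz i) hmi)).
case=> z _ ->; apply/andP; split; apply/forallP => i.
  have hi : (i < N)%N by have := ltn_ord i; lia.
  by rewrite (seqx_lt _ hi) ffunE /= ltn_ord seqaE; apply/eqP; congr (a 0 _); apply: val_inj.
apply/implyP => hmi; rewrite ffunE ifF; last by lia.
by rewrite seqx_out //; lia.
Qed.

Lemma card_Yset : #|Yset| = (#|F| ^ (m - k))%N.
Proof. by rewrite Yset_im card_imset ?cardsT ?card_ffun ?card_ord //; exact: gY_inj. Qed.

Variable v : 'rV[F]_m.+1.
Hypothesis hv : v 0 ord_max != 0.

Definition TB (x : X) : X :=
  [ffun i : 'I_N => if (i < m)%N then x i else \sum_(l < m.+1) v 0 l * seqx x (l + (i - m))].

Lemma TB_inj : injective TB.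
Proof.
move=> x y Hxy.
suff H : forall p i, (i < p)%N -> seqx x i = seqx y i.
  by apply/ffunP => i; rewrite -!seqxE; exact: (H i.+1 i (ltnSn _)).
elim=> [//|p IH] i; rewrite ltnS leq_eqVlt => /orP [/eqP -> | /IH //].
case: (ltnP p N) => hp; last by rewrite !seqx_out.
have := congr1 (fun g : X => g (Ordinal hp)) Hxy; rewrite !ffunE /= !(seqx_lt _ hp).
case: ifP => hpm //.
rewrite !big_ord_recr /=.
have -> : (m + (p - m) = p)%N by lia.
rewrite !(seqx_lt _ hp).
have -> : \sum_(i0 < m) v 0 (widen_ord (leqnSn m) i0) * seqx x (i0 + (p - m)) =
          \sum_(i0 < m) v 0 (widen_ord (leqnSn m) i0) * seqx y (i0 + (p - m)).
  by apply: eq_bigr => l _; rewrite IH //; have := ltn_ord l; lia.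
by move/addrI/(mulfI hv).
Qed.

Lemma card_B :
  #|[set x : X | prefix_eq a x && (v *m hankel m.+1 n.+1 (seqx x) == 0)]| = (#|F| ^ (m - k))%N.
Proof.
rewrite -card_Yset /Yset -[RHS](card_inj_pre _ TB_inj); apply: eq_card => x; rewrite !inE.
congr andb.
  apply: eq_forallb => i; congr (_ == _).
  rewrite /seqx; case: insubP => [j _ hj | //].
  by rewrite ffunE ifT // hj; have := ltn_ord i; lia.
rewrite hankP; apply/forallP/forallP => H.
  move=> i; apply/implyP => hmi; rewrite ffunE ifF; last by lia.
  have hj : (i - m < n.+1)%N by have := ltn_ord i; lia.
  exact: (H (Ordinal hj)).
move=> j; have hj : (m + j < N)%N by have := ltn_ord j; lia.
have := implyP (H (Ordinal hj)) (leq_addr _ _).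
by rewrite ffunE /= ifF ?addKn //; lia.
Qed.

End B.


Section A.
Variables (F : finFieldType) (k m n : nat) (a : 'rV[F]_k).
Hypotheses (hkm : (k <= m)%N) (hkn : (k <= n.+1)%N).
Local Notation N := (m + n + 1)%N.
Local Notation X := {ffun 'I_N -> F}.
Variable w : 'rV[F]_m.
Hypothesis hw : w != 0.

Definition EE (f : nat -> F) j := \sum_(i < m) w 0 i * f (i + j)%N.

Definition S1 := [set x : X | prefix_eq a x && [forall j : 'I_n.+1, EE (seqx x) j == 0]].
Definition S2 := [set x : X | prefix_eq a x && [forall j : 'I_n.+2, EE (seqx x) j == 0]].

Lemma exd : exists d : 'I_m, w 0 d != 0 /\ forall i : 'I_m, (d < i)%N -> w 0 i = 0.
Proof.
have [i0 hi0] : exists i0, w 0 i0 != 0.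
  apply/existsP; apply: contraR hw => /existsPn H; apply/eqP/rowP => j.
  by rewrite mxE; apply/eqP; have := H j; rewrite negbK.
case: (@arg_maxnP _ i0 (fun i => w 0 i != 0) (fun i => i : nat) hi0) => d hd H.
exists d; split => // i hi; apply/eqP; apply: contraTT hi => /H; rewrite -leqNgt.
by [].
Qed.

Lemma card_A : #|S1| = (#|F| * #|S2|)%N.
Proof.
have [d [hd hz]] := exd.
have he : (d + n.+1 < N)%N by have := ltn_ord d; lia.
pose e := Ordinal he.
pose h (t : F) (x : X) : X := [ffun i : 'I_N => if i == e then x i + t else x i].
have h_inj t : injective (h t).
  move=> x y H; apply/ffunP => i; have := congr1 (fun g : X => g i) H; rewrite !ffunE.
  by case: ifP => _ // /addIr.
have seqh t x j : seqx (h t x) j = seqx x j + (if j == e then t else 0).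
  rewrite /seqx; case: insubP => [i _ hi | hn].
    by rewrite ffunE -hi val_eqE; case: ifP => _; rewrite ?addr0.
  case: eqP => hj; rewrite ?addr0 //; move: hn; rewrite hj ltn_ord //.
have Eh t x j : (j < n.+1)%N -> EE (seqx (h t x)) j = EE (seqx x) j.
  move=> hj; apply: eq_bigr => i _; rewrite seqh; case: eqP => hij; rewrite ?addr0 //.
  by rewrite hz ?mul0r //= ; move: hij => /= hij; lia.
have Ehn t x : EE (seqx (h t x)) n.+1 = EE (seqx x) n.+1 + w 0 d * t.
  rewrite /EE; under eq_bigr do rewrite seqh mulrDr.
  rewrite big_split /=; congr (_ + _).
  rewrite (bigD1 d) //= eqxx big1 ?addr0 // => i hi.
  have -> : (i + n.+1 == e)%N = (i == d) by rewrite /= eqn_add2r.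
  by rewrite (negbTE hi) mulr0.
have hpre t x : prefix_eq a (h t x) = prefix_eq a x.
  apply: eq_forallb => i; rewrite seqh ifF ?addr0 //.
  by move: (ltn_ord i) => ?; apply/eqP => /= ?; lia.
have hS1 t x : (h t x \in S1) = (x \in S1).
  rewrite !inE hpre; congr andb; apply: eq_forallb => j; by rewrite Eh.
pose f (x : X) := EE (seqx x) n.+1.
have hS2 : S2 = [set x | (x \in S1) && (f x == 0)].
  apply/setP => x; rewrite !inE -andbA; congr andb.
  apply/forallP/andP => [H | [/forallP H1 H2] j].
    split; last exact: (H ord_max).
    by apply/forallP => j; exact: (H (widen_ord (leqnSn _) j)).
  case: (ltnP j n.+1) => hj; first exact: (H1 (Ordinal hj)).
  by have -> : nat_of_ord j = n.+1 by have := ltn_ord j; lia.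
have -> : #|S1| = (\sum_(c : F) #|[set x | (x \in S1) && (f x == c)]|)%N.
  rewrite -sum1_card (partition_big f predT) //=; apply: eq_bigr => c _.
  by rewrite -sum1_card; apply: eq_bigl => x; rewrite inE.
rewrite (eq_bigr (fun _ => #|S2|)) ?sum_nat_const ?cardT ?size_enum_ord //.
move=> c _.
rewrite -(card_inj_pre (fun y => (y \in S1) && (f y == c)) (h_inj (c / w 0 d))) hS2.
apply: eq_card => x; rewrite [in LHS]inE [in RHS]inE hS1 /f Ehn mulrC divfK //.
by rewrite -subr_eq0 addrK.
Qed.

End A.


Definition ext (F : finFieldType) m (w : 'rV[F]_m) : 'rV[F]_m.+1 :=
  \row_j (if unlift ord_max j is Some i then w 0 i else 0).
Definition restr (F : finFieldType) m (v : 'rV[F]_m.+1) : 'rV[F]_m :=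
  \row_i v 0 (lift ord_max i).

Lemma ext_max (F : finFieldType) m (w : 'rV[F]_m) : ext w 0 ord_max = 0.
Proof. by rewrite mxE unlift_none. Qed.
Lemma ext_lift (F : finFieldType) m (w : 'rV[F]_m) i : ext w 0 (lift ord_max i) = w 0 i.
Proof. by rewrite mxE liftK. Qed.
Lemma restr_ext (F : finFieldType) m (w : 'rV[F]_m) : restr (ext w) = w.
Proof. by apply/rowP => i; rewrite mxE ext_lift. Qed.
Lemma ext_restr (F : finFieldType) m (v : 'rV[F]_m.+1) : v 0 ord_max = 0 -> ext (restr v) = v.
Proof.
move=> h; apply/rowP => j; rewrite mxE; case: unliftP => [i -> | ->]; by rewrite ?mxE.
Qed.
Lemma ext_eq0 (F : finFieldType) m (w : 'rV[F]_m) : (ext w == 0) = (w == 0).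
Proof.
apply/eqP/eqP => [H | ->].
  by rewrite -(restr_ext w) H; apply/rowP => i; rewrite !mxE.
by apply/rowP => j; rewrite !mxE; case: (unlift _ _) => [i|]; rewrite ?mxE.
Qed.
Lemma ext_inj (F : finFieldType) m : injective (@ext F m).
Proof. by move=> w w' H; rewrite -(restr_ext w) H restr_ext. Qed.

Lemma ext_sum (F : finFieldType) m (w : 'rV[F]_m) (f : nat -> F) j :
  \sum_(i < m.+1) ext w 0 i * f (i + j)%N = \sum_(i < m) w 0 i * f (i + j)%N.
Proof.
rewrite big_ord_recr /= ext_max mul0r addr0; apply: eq_bigr => i _.
have -> : widen_ord (leqnSn m) i = lift ord_max i by apply: val_inj; rewrite /= /bump leqNgt ltn_ord.
by rewrite ext_lift.
Qed.


Theorem lemma15 (F : finFieldType) (k m n : nat) (a : 'rV[F]_k)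
  (hkm : (k <= m)%N) (hkn : (k <= n.+1)%N) :
  ((\sum_(x : {ffun 'I_(m + n + 1) -> F} | prefix_eq a x)
      \sum_(v : 'rV[F]_(m.+1) | v != 0%R)
        nat_of_bool (v *m hankel m.+1 n.+1 (seqx x) == 0%R))%N)%:Z
  - (#|F|%:Z) *
    ((\sum_(x : {ffun 'I_(m + n + 1) -> F} | prefix_eq a x)
      \sum_(v : 'rV[F]_m | v != 0%R)
        nat_of_bool (v *m hankel m n.+2 (seqx x) == 0%R))%N)%:Z
  = ((#|F| - 1) * #|F| ^ (2 * m - k))%N%:Z.
Proof.
set q := #|F|.
pose c1 (v : 'rV[F]_m.+1) := #|[set x : {ffun 'I_(m + n + 1) -> F} |
    prefix_eq a x && (v *m hankel m.+1 n.+1 (seqx x) == 0)]|.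
pose c2 (v : 'rV[F]_m) := #|[set x : {ffun 'I_(m + n + 1) -> F} |
    prefix_eq a x && (v *m hankel m n.+2 (seqx x) == 0)]|.
have -> : (\sum_(x : {ffun 'I_(m + n + 1) -> F} | prefix_eq a x)
      \sum_(v : 'rV[F]_(m.+1) | v != 0%R)
        nat_of_bool (v *m hankel m.+1 n.+1 (seqx x) == 0%R))%N
   = (\sum_(v : 'rV[F]_(m.+1) | v != 0%R) c1 v)%N.
  by rewrite exchange_big; apply: eq_bigr => v _; exact: sum_bool_card.
have -> : (\sum_(x : {ffun 'I_(m + n + 1) -> F} | prefix_eq a x)
      \sum_(v : 'rV[F]_m | v != 0%R)
        nat_of_bool (v *m hankel m n.+2 (seqx x) == 0%R))%N
   = (\sum_(v : 'rV[F]_m | v != 0%R) c2 v)%N.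
  by rewrite exchange_big; apply: eq_bigr => v _; exact: sum_bool_card.
pose A := (@ext F m) @: [set: 'rV[F]_m].
have hA : #|A| = (q ^ m)%N by rewrite card_imset ?cardsT ?card_mx ?mul1n //; exact: ext_inj.
have hC : #|~: A| = (q ^ m.+1 - q ^ m)%N.
  have := cardsC A; rewrite hA card_mx mul1n => <-; by rewrite addKn.
have -> : (\sum_(v : 'rV[F]_(m.+1) | v != 0%R) c1 v)%N =
   (#|~: A| * q ^ (m - k) + q * \sum_(w : 'rV[F]_m | w != 0%R) c2 w)%N.
  rewrite (bigID (fun v : 'rV[F]_m.+1 => v 0 ord_max == 0)) /= addnC; congr (_ + _)%N.
    rewrite (eq_bigl (fun v => v \in ~: A)) => [|v].
      rewrite (eq_bigr (fun _ => q ^ (m - k))%N) ?sum_nat_const // => v.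
      rewrite inE => hv; apply: card_B => //.
      by apply: contra hv => /eqP h; apply/imsetP; exists (restr v); rewrite ?inE ?ext_restr.
    rewrite inE; have -> : (v \in A) = (v 0 ord_max == 0).
      apply/imsetP/eqP => [[w _ ->] | h]; first exact: ext_max.
      by exists (restr v); rewrite ?inE ?ext_restr.
    case: (altP (v =P 0)) => [->|] /=; by rewrite ?mxE ?eqxx.
  rewrite (reindex_onto (@ext F m) (@restr F m)) /=; last first.
    by move=> v /andP [_ /eqP h]; exact: ext_restr.
  rewrite big_distrr /=.
  apply: eq_big => [w | w hw]; first by rewrite ext_eq0 ext_max eqxx restr_ext eqxx !andbT.
  move: hw; rewrite ext_eq0 => /andP [/andP [hw _] _].
  have e1 : c1 (ext w) = #|@S1 F k m n a w|.
    apply: eq_card => x; rewrite !inE hankP; congr andb; apply: eq_forallb => j.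
    by rewrite ext_sum.
  have e2 : c2 w = #|@S2 F k m n a w| by apply: eq_card => x; rewrite !inE hankP.
  by rewrite e1 e2 (card_A a hkm hkn hw).
rewrite hC PoszD PoszM addrK -PoszM; congr Posz.
rewrite expnS -{2}(mul1n (q ^ m)%N) -mulnBl -mulnA -expnD; congr (_ * q ^ _)%N; lia.
Qed.
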